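(* Let $\omega\in\mathcal C(\mathbb Z)$ satisfy $\omega*\omega=\omega$. Then the map $p_\omega:\beta\mathbb Z\to\mathcal R(p_\omega)$ is a $\mathbb Z$-retraction of $\beta\mathbb Z$ onto the proper subset $\mathcal R(p_\omega)=p_\omega(\beta\mathbb Z)$. Consequently the map $\pi_\omega: C(\beta\mathbb Z)\to C(\beta\mathbb Z)$, $\pi_\omega(f)=f\circ p_\omega$, is a $\mathbb Z$-equivariant idempotent $*$-homomorphism onto a proper subalgebra, with $\sigma(\pi_\omega)=\mathbb T$.
   Context: $\beta\mathbb Z$ is the Stone–Čech compactification of $\mathbb Z$, $\mathcal C(\mathbb Z)=\beta\mathbb Z\setminus\mathbb Z$. Let $\varphi$ be the homeomorphism of $\beta\mathbb Z$ extending $k\mapsto k+1$; $\mathbb Z$ acts on $\beta\mathbb Z$ by $m\cdot q=\varphi^{(m)}(q)$ and on $C(\beta\mathbb Z)\cong\ell^\infty(\mathbb Z)$ by $f\mapsto f(m\cdot\,\cdot)$. For $\omega\in\beta\mathbb Z$, $p_\omega$ is the unique continuous extension of $k\mapsto\varphi^{(k)}(\omega)$ to $\beta\mathbb Z$, and $\omega*q=p_\omega(q)$. A $\mathbb Z$-retraction onto a closed invariant set $Y$ is a continuous equivariant surjection $\gamma:\beta\mathbb Z\to Y$ fixing $Y$ pointwise. For a $\mathbb Z$-equivariant linear map $\pi$ and $x_\lambda=(\lambda^n)_n$, $\pi(x_\lambda)=c_\lambda x_\lambda$ and $\sigma(\pi)=\{\lambda\in\mathbb T:c_\lambda\neq0\}$.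 *)

(* Defs.v *)
From HB Require Import structures.
From mathcomp Require Import all_boot all_order all_algebra.
From mathcomp Require Import boolp classical_sets reals.
From mathcomp Require Import complex.
Set Implicit Arguments. Unset Strict Implicit. Unset Printing Implicit Defensive.
Import Order.TTheory GRing.Theory Num.Theory.
Local Open Scope classical_set_scope.
Local Open Scope ring_scope.

(* beta Z, realised as the set of ultrafilters on Z.  Its (Stone) topology has as base the clopen sets
   hat A = [set q | q A], A : set int.                                  *)

Definition pt := set (set int).

Definition is_ultrafilter (U : pt) : Prop :=
  [/\ U setT, ~ U set0,
      (forall A B, U A -> A `<=` B -> U B),
      (forall A B, U A -> U B -> U (A `&` B)) &
      (forall A, U A \/ U (~` A))].

Definition betaZ : set pt := [set U | is_ultrafilter U].

Definition principal (k : int) : pt := [set A | A k].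

(* the growth C(Z) = beta Z \ Z *)
Definition corona : set pt :=
  [set q | betaZ q /\ forall k : int, q <> principal k].

(* the Z-action m . q = phi^(m)(q) : image ultrafilter under n |-> n + m *)
Definition act (m : int) (q : pt) : pt := [set A | q [set n | A (n + m)]].

Definition cont_bZ (g : pt -> pt) : Prop :=
  forall q, betaZ q -> forall A, g q A ->
    exists2 B, q B & forall q', betaZ q' -> q' B -> g q' A.

Definition closed_bZ (Y : set pt) : Prop :=
  Y `<=` betaZ /\
  forall q, betaZ q -> ~ Y q ->
    exists2 B, q B & forall q', betaZ q' -> q' B -> ~ Y q'.

Definition invariant_bZ (Y : set pt) : Prop :=
  forall m q, Y q -> Y (act m q).

Definition Z_retraction (g : pt -> pt) (Y : set pt) : Prop :=
  [/\ closed_bZ Y /\ invariant_bZ Y,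
      cont_bZ g,
      (forall m q, betaZ q -> g (act m q) = act m (g q)),
      g @` betaZ = Y &
      (forall y, Y y -> g y = y)].

Definition is_p_ext (omega : pt) (p : pt -> pt) : Prop :=
  [/\ forall q, betaZ q -> betaZ (p q),
      cont_bZ p &
      forall k : int, p (principal k) = act k omega].

(* C(beta Z) : complex-valued continuous functions on beta Z.  Two such
   functions are identified when they agree on beta Z.                  *)

Definition cont_C (R : realType) (f : pt -> R[i]) : Prop :=
  forall q, betaZ q -> forall e : R[i], 0 < e ->
    exists2 B, q B & forall q', betaZ q' -> q' B -> `|f q' - f q| < e.

Definition eq_bZ (R : realType) (f g : pt -> R[i]) : Prop :=
  forall q, betaZ q -> f q = g q.

Definition actC (R : realType) (m : int) (f : pt -> R[i]) : pt -> R[i] :=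
  fun q => f (act m q).

Definition is_x_ext (R : realType) (lambda : R[i]) (x : pt -> R[i]) : Prop :=
  cont_C x /\ forall n : int, x (principal n) = lambda ^ n.

(* Main.v *)
Require Import Defs.
From HB Require Import structures.
From mathcomp Require Import all_boot all_order all_algebra.
From mathcomp Require Import boolp classical_sets reals.
From mathcomp Require Import complex.
Import Order.TTheory GRing.Theory Num.Theory.
Local Open Scope classical_set_scope.
Local Open Scope ring_scope.
Set Implicit Arguments. Unset Strict Implicit.

Lemma uf_mono U A B : betaZ U -> U A -> A `<=` B -> U B.
Proof. by case=> _ _ H _ _; apply: H. Qed.

Lemma uf_inter U A B : betaZ U -> U A -> U B -> U (A `&` B).
Proof. by case=> _ _ _ H _; apply: H. Qed.

Lemma uf_ne U A : betaZ U -> U A -> exists k, A k.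
Proof.
move=> hU hA; apply: contrapT => hn.
have [_ H0 _ _ _] := hU; apply: H0; apply: (uf_mono hU hA) => k Ak.
by apply: hn; exists k.
Qed.

Lemma uf_compl U A : betaZ U -> U A -> U (~` A) -> False.
Proof. by move=> hU h1 h2; have [k []] := uf_ne hU (uf_inter hU h1 h2). Qed.

Lemma uf_em U A : betaZ U -> U A \/ U (~` A).
Proof. by case=> _ _ _ _; apply. Qed.

Lemma principal_bZ k : betaZ (principal k).
Proof.
split => //=.
- by move=> A B Ak /(_ _ Ak).
- by move=> A; case: (pselect (A k)) => h; [left|right]; exact: h.
Qed.

Lemma act_bZ m q : betaZ q -> betaZ (act m q).
Proof.
move=> hq; split => /=.
- by rewrite /act; apply: (uf_mono hq (_ : q setT)) => //; case: hq.
- by rewrite /act => h; have [k []] := uf_ne hq h.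
- by rewrite /act => A B hA AB; apply: (uf_mono hq hA) => n /AB.
- move=> A B hA hB; exact: (uf_inter hq hA hB).
- move=> A; exact: (uf_em [set n | A (n + m)] hq).
Qed.

Lemma act_cont m : cont_bZ (act m).
Proof. by move=> q hq A hA; exists [set n | A (n + m)]. Qed.

Lemma act_act m k q : act m (act k q) = act (k + m) q.
Proof.
rewrite /act; apply/funext => A /=; congr (q _); apply/funext => n /=.
by rewrite addrA.
Qed.

Lemma act_principal m k : act m (principal k) = principal (k + m).
Proof. by []. Qed.

Lemma act0 q : act 0 q = q.
Proof.
rewrite /act; apply/funext => A /=; congr (q _); apply/funext => n /=.
by rewrite addr0.
Qed.

Lemma cont_comp g h : cont_bZ g -> cont_bZ h ->
  (forall q, betaZ q -> betaZ (h q)) -> cont_bZ (g \o h).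
Proof.
move=> cg ch hh q hq A /= hA.
have [B hB HB] := cg _ (hh _ hq) _ hA.
have [B' hB' HB'] := ch _ hq _ hB.
exists B' => // q' hq' /HB' => /(_ hq') hB1.
exact: HB (hh _ hq') hB1.
Qed.

Lemma cont_eq g h :
  (forall q, betaZ q -> betaZ (g q)) -> (forall q, betaZ q -> betaZ (h q)) ->
  cont_bZ g -> cont_bZ h -> (forall k, g (principal k) = h (principal k)) ->
  forall q, betaZ q -> g q = h q.
Proof.
have key : forall g, (forall q, betaZ q -> betaZ (g q)) -> cont_bZ g ->
    forall q, betaZ q -> forall A, g q A -> q [set k | g (principal k) A].
  move=> g0 bg cg q hq A hA.
  have [B hB HB] := cg _ hq _ hA.
  by apply: (uf_mono hq hB) => k Bk; apply: HB (principal_bZ k) Bk.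
have key2 : forall g, (forall q, betaZ q -> betaZ (g q)) -> cont_bZ g ->
    forall q, betaZ q -> forall A, q [set k | g (principal k) A] -> g q A.
  move=> g0 bg cg q hq A hA.
  case: (uf_em A (bg _ hq)) => // hc.
  have := key _ bg cg _ hq _ hc => hc'.
  exfalso; have [k [h1 h2]] := uf_ne hq (uf_inter hq hA hc').
  exact: uf_compl (bg _ (principal_bZ k)) h1 h2.
move=> bg bh cg ch E q hq; apply/funext => A; apply/propext.
have eqs : [set k | g (principal k) A] = [set k | h (principal k) A].
  by apply/funext => k /=; rewrite E.
split => hA.
- apply: (key2 _ bh ch _ hq); rewrite -eqs; exact: (key _ bg cg _ hq _ hA).
- apply: (key2 _ bg cg _ hq); rewrite eqs; exact: (key _ bh ch _ hq _ hA).
Qed.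

Lemma p_equiv omega p : is_p_ext omega p ->
  forall m q, betaZ q -> p (act m q) = act m (p q).
Proof.
case=> bp cp pk m.
apply: (cont_eq (g := p \o act m) (h := act m \o p)).
- by move=> q hq /=; apply: bp; apply: act_bZ.
- by move=> q hq /=; apply: act_bZ; apply: bp.
- apply: cont_comp => //; [exact: act_cont | exact: act_bZ].
- by apply: cont_comp => //; exact: act_cont.
- by move=> k /=; rewrite act_principal !pk act_act.
Qed.

Lemma p_idem omega p : is_p_ext omega p -> betaZ omega -> p omega = omega ->
  forall q, betaZ q -> p (p q) = p q.
Proof.
move=> hp bo po; have [bp cp pk] := hp.
apply: (cont_eq (g := p \o p) (h := p)) => //.
- by move=> q hq /=; exact: (bp _ (bp _ hq)).
- exact: cont_comp.
- by move=> k /=; rewrite pk (p_equiv hp) // po.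
Qed.

Lemma cont_C_comp (R : realType) (f : pt -> R[i]) g :
  cont_C f -> cont_bZ g -> (forall q, betaZ q -> betaZ (g q)) -> cont_C (f \o g).
Proof.
move=> cf cg bg q hq e e0.
have [B hB HB] := cf _ (bg _ hq) _ e0.
have [B' hB' HB'] := cg _ hq _ hB.
exists B' => // q' hq' hq'B /=.
exact: HB (bg _ hq') (HB' _ hq' hq'B).
Qed.

Lemma cont_C_scale (R : realType) (f : pt -> R[i]) (a : R[i]) :
  cont_C f -> cont_C (fun q => a * f q).
Proof.
move=> cf q hq e e0.
have [->|a0] := eqVneq a 0.
  by exists setT => [|q' _ _]; [case: hq | rewrite !mul0r subrr normr0].
have na : 0 < `|a| by rewrite normr_gt0.
have [B hB HB] := cf _ hq (e / `|a|) (divr_gt0 e0 na).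
exists B => // q' hq' hB'.
rewrite -mulrBr normrM.
have := HB _ hq' hB'; rewrite -(ltr_pM2l na) => H.
by apply: (lt_le_trans H); rewrite mulrC divfK // gt_eqF.
Qed.

Lemma cont_C_uniq (R : realType) (f g : pt -> R[i]) :
  cont_C f -> cont_C g -> (forall k, f (principal k) = g (principal k)) ->
  eq_bZ f g.
Proof.
move=> cf cg E q hq; apply/eqP; apply: contraT => neq.
have d0 : 0 < `|f q - g q| by rewrite normr_gt0 subr_eq0.
set e := `|f q - g q| / 2.
have e0 : 0 < e by rewrite divr_gt0.
have [B1 h1 H1] := cf _ hq _ e0.
have [B2 h2 H2] := cg _ hq _ e0.
have [k [k1 k2]] := uf_ne hq (uf_inter hq h1 h2).
have := H1 _ (principal_bZ k) k1; have := H2 _ (principal_bZ k) k2.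
rewrite E => L2 L1.
have : `|f q - g q| < e + e.
  apply: le_lt_trans (ler_distD (g (principal k)) _ _) _.
  by apply: ltrD => //; rewrite distrC.
by rewrite /e -splitr ltxx.
Qed.
Unset Implicit Arguments.

Theorem theorem2p13 (R : realType) (omega : pt) (p : pt -> pt) :
  corona omega ->
  is_p_ext omega p ->
  p omega = omega ->
  (* p_omega is a Z-retraction onto the proper subset R(p_omega) *)
  (Z_retraction p (p @` betaZ) /\ p @` betaZ <> betaZ) /\
  (* pi_omega f = f o p_omega on C(beta Z) *)
  let pi := fun f : pt -> R[i] => f \o p in
  [/\ (* maps C(beta Z) to C(beta Z) *)
      (forall f, cont_C f -> cont_C (pi f)) /\
      (* Z-equivariant *)
      (forall m f, cont_C f -> eq_bZ (pi (actC m f)) (actC m (pi f))),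
      (* idempotent *)
      (forall f, cont_C f -> eq_bZ (pi (pi f)) (pi f)),
      (* *-homomorphism *)
      [/\ (forall (a b : R[i]) f g, cont_C f -> cont_C g ->
             eq_bZ (pi (fun q => a * f q + b * g q))
                   (fun q => a * pi f q + b * pi g q)),
          (forall f g, cont_C f -> cont_C g ->
             eq_bZ (pi (fun q => f q * g q)) (fun q => pi f q * pi g q)) &
          (forall f, cont_C f ->
             eq_bZ (pi (fun q => (f q)^*)) (fun q => (pi f q)^*))],
      (* onto a proper subalgebra *)
      (exists2 g, cont_C g & forall f, cont_C f -> ~ eq_bZ (pi f) g) &
      (* sigma(pi_omega) = T *)
      (forall lambda : R[i], `|lambda| = 1 ->
         exists2 c : R[i], c != 0 &
           forall x, is_x_ext lambda x ->
             eq_bZ (pi x) (fun q => c * x q))].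
Proof.
move=> [bo notprin] hp po; have [bp cp pk] := hp.
have idem := p_idem hp bo po.
have equiv := p_equiv hp.
have p0 : p (principal 0) = omega by rewrite pk act0.
have nY : forall y, (p @` betaZ) y -> p y = y.
  by move=> y [q hq <-]; exact: idem.
split.
  split.
    split.
    - split.
        split; first by move=> y [q hq <-]; exact: bp.
        move=> q hq nYq.
        have : exists A, q A /\ ~ p q A.
          apply: contrapT => H.
          have H' : forall A, q A -> p q A.
            by move=> A qa; apply: contrapT => n; apply: H; exists A.
          apply: nYq; exists q => //.
          apply/funext => A; apply/propext; split => hA; last exact: H'.
          case: (uf_em A hq) => // hc; exfalso.
          exact: (uf_compl (bp _ hq) hA (H' _ hc)).
        case=> A [qA npA].
        have pqc : p q (~` A) by case: (uf_em A (bp _ hq)).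
        have [B hB HB] := cp _ hq _ pqc.
        exists (A `&` B); first exact: uf_inter.
        move=> q' hq' hAB [q'' hq'' E].
        have q'A : q' A by apply: (uf_mono hq' hAB) => k [].
        have q'B : q' B by apply: (uf_mono hq' hAB) => k [].
        have Hfix : p q' = q' by rewrite -E idem.
        have := HB _ hq' q'B; rewrite Hfix => hc.
        exact: (uf_compl hq' q'A hc).
      rewrite /invariant_bZ => m y [q hq <-]; exists (act m q); [exact: act_bZ | exact: equiv].
    - exact: cp.
    - exact: equiv.
    - by [].
    - exact: nY.
  move=> E.
  have : (p @` betaZ) (principal 0) by rewrite E; exact: principal_bZ.
  move=> /nY; rewrite p0 => h; exact: (notprin 0 h).
move=> pi; rewrite /pi.
split.
- split; first by move=> f cf; exact: cont_C_comp.
  by move=> m f cf q hq; rewrite /= /actC /= equiv.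
- by move=> f cf q hq /=; rewrite idem.
- by split.
- pose g : pt -> R[i] := fun q => if pselect (q [set 0%Z]) then 1 else 0.
  have g1 : forall q, q [set 0%Z] -> g q = 1.
    by move=> q h; rewrite /g; case: pselect.
  have g0 : forall q, ~ q [set 0%Z] -> g q = 0.
    by move=> q h; rewrite /g; case: pselect.
  exists g.
    move=> q hq e e0; case: (uf_em [set 0%Z] hq) => h.
      exists [set 0%Z] => // q' hq' h'.
      by rewrite g1 // g1 // subrr normr0.
    exists (~` [set 0%Z]) => // q' hq' h'.
    rewrite g0; last by move=> h2; apply: (uf_compl hq' h2 h').
    rewrite g0; last by move=> h2; apply: (uf_compl hq h2 h).
    by rewrite subrr normr0.
  have no0 : ~ omega [set 0%Z].
    move=> h0; apply: (notprin 0); apply/funext => A; apply/propext.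
    split => /= hA.
    - apply: contrapT => nA.
      have [k [kA k0]] := uf_ne bo (uf_inter bo hA h0).
      by apply: nA; move: kA; rewrite /= k0.
    - by apply: (uf_mono bo h0) => k /= ->.
  move=> f cf E.
  have e1 := E _ (principal_bZ 0); have e2 := E _ bo.
  move: e1 e2 => /=; rewrite p0 po => ->.
  rewrite g1 // g0 // => h; have := @oner_neq0 R[i]; by rewrite h eqxx.
- move=> lambda nl.
  have l0 : lambda \is a GRing.unit by rewrite unitfE -normr_eq0 nl oner_eq0.
  have nlk : forall k : int, `|lambda ^ k| = 1.
    case=> n /=.
      by rewrite normrX nl expr1n.
    by rewrite normfV normrX nl expr1n invr1.
  case: (pselect (exists x, is_x_ext lambda x)) => [[x0 [cx0 px0]]|nox]; last first.
    exists 1; first exact: oner_neq0.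
    by move=> x hx; exfalso; apply: nox; exists x.
  exists (x0 omega).
    apply/negP => /eqP z.
    have [B hB HB] := cx0 _ bo 1 ltr01.
    have [k Bk] := uf_ne bo hB.
    have := HB _ (principal_bZ k) Bk.
    by rewrite px0 z subr0 nlk ltxx.
  move=> x [cx px].
  have xx0 : eq_bZ x x0.
    by apply: cont_C_uniq => // k; rewrite px px0.
  have xact : forall k, x (act k omega) = lambda ^ k * x omega.
    move=> k.
    apply: (cont_C_uniq (f := x \o act k) (g := fun q => lambda ^ k * x q)) bo.
    - apply: cont_C_comp => //; first exact: act_cont.
      by move=> q; apply: act_bZ.
    - exact: cont_C_scale.
    - by move=> n /=; rewrite act_principal !px exprzDr // mulrC.
  apply: (cont_C_uniq (f := x \o p) (g := fun q => x0 omega * x q)).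
  - exact: cont_C_comp.
  - exact: cont_C_scale.
  - by move=> k /=; rewrite pk xact px -(xx0 _ bo) mulrC.
Qed.
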